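(* Let $H=(\mathbb R^n,E)$ be an algebraic $k$-hypergraph, let $P$ be a $d$-dimensional $k$-template, and suppose $L(\mathbb R^d,P)$ is immersible in $H$. Then $H$ contains an $L(\mathbb R^d,P)$.
   Context: Here $1\le d,n<\omega$, $2\le k<\omega$. A $k$-hypergraph $(V,E)$ has nonempty $V$ and $E$ a set of $k$-element subsets of $V$. A $(k,n)$-ary polynomial is a real polynomial $p(x_0,\dots,x_{k-1})$ with each $x_i$ an $n$-tuple of variables; its zero hypergraph is $(\mathbb R^n,E)$ where $E$ consists of the $k$-element sets $\{a_0,\dots,a_{k-1}\}\subseteq\mathbb R^n$ (distinct $a_i$) with $p(a_0,\dots,a_{k-1})=0$; a hypergraph is algebraic if it is such a zero hypergraph. A $d$-dimensional $k$-template is a set $P$ of $d$-tuples with $|P|=k$. If $P,Q$ are $d$-dimensional templates, $Q$ is a homomorphic image of $P$ if there is a surjection $f:P\to Q$ such that for all $x,y\in P$, $i<d$, $x_i=y_i$ implies $f(x)_i=f(y)_i$. For $X=X_0\times\cdots\times X_{d-1}$, $L(X,P)$ is the $k$-hypergraph with vertex set $X$ whose edges are the $k$-templates $Q\subseteq X$ that are homomorphic images of $P$. An open box in $\mathbb R^m$ is a product of $m$ nonempty open intervals. A function $g$ on $A=A_0\times\cdots\times A_{m-1}$ is one-to-one in each coordinate if whenever $i<m$ and $a,b\in A$ satisfy ($a_j=b_j$ iff $j\ne i$), then $g(a)\ne g(b)$. For an open box $B\subseteq\mathbb R^d$, an immersion of $L(B,P)$ into $H$ is a semialgebraic (semialgebraic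 graph) analytic function $f:B\to\mathbb R^n$ that is one-to-one in each coordinate and such that whenever $\{x_0,\dots,x_{k-1}\}$ is an edge of $L(B,P)$ and $f(x_0),\dots,f(x_{k-1})$ are pairwise distinct, $\{f(x_0),\dots,f(x_{k-1})\}\in E$. $L(\mathbb R^d,P)$ is immersible in $H$ if there is an open box $B\subseteq\mathbb R^d$ and an immersion of $L(B,P)$ into $H$. $H$ contains an $H_1=(V_1,E_1)$ if there is a map $V_1\to\mathbb R^n$ that is an isomorphism of $H_1$ onto a subhypergraph $(V',E')$ of $H$ ($V'\subseteq\mathbb R^n$, $E'\subseteq E$). *)

(* Defs.v *)
From HB Require Import structures.
From mathcomp Require Import all_boot all_order all_algebra.
From mathcomp Require Import all_classical all_reals all_analysis.
From mathcomp Require mpoly.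
From Stdlib Require List.
Set Implicit Arguments. Unset Strict Implicit. Unset Printing Implicit Defensive.
Import Order.TTheory GRing.Theory Num.Theory.
Import numFieldNormedType.Exports.
Local Open Scope classical_set_scope.
Local Open Scope ring_scope.

Section Defs.
Variable R : realType.

Definition peval (m : nat) (p : mpoly.mpoly m R) (x : 'rV[R]_m) : R :=
  mpoly.meval (fun j => x 0 j) p.

Definition kset (T : Type) (k : nat) (S : set T) : Prop :=
  exists a : 'I_k -> T, injective a /\ S = [set a i | i in setT].

(* A k-hypergraph with vertex set R^n is given by its edge set
   E : set (set 'rV[R]_n).  A (k,n)-ary polynomial is a polynomial in k*n
   variables; its variables are the entries of a k x n matrix whose i-th row
   is the n-tuple x_i, flattened with mxvec. *)
Definition eval_kn (k n : nat) (p : mpoly.mpoly (k * n) R)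
  (a : 'I_k -> 'rV[R]_n) : R :=
  peval p (mxvec (\matrix_(i < k, j < n) a i 0 j)).

Definition zero_edges (k n : nat) (p : mpoly.mpoly (k * n) R)
  : set (set 'rV[R]_n) :=
  [set S | exists a : 'I_k -> 'rV[R]_n,
      [/\ injective a, S = [set a i | i in setT] & eval_kn p a = 0]].

Definition algebraic (k n : nat) (E : set (set 'rV[R]_n)) : Prop :=
  exists p : mpoly.mpoly (k * n) R, E = zero_edges p.

Definition template (d k : nat) (P : set 'rV[R]_d) : Prop := kset k P.

Definition hom_image (d : nat) (P Q : set 'rV[R]_d) : Prop :=
  exists f : 'rV[R]_d -> 'rV[R]_d,
    f @` P = Q /\
    (forall x y, P x -> P y -> forall i : 'I_d, x 0 i = y 0 i -> f x 0 i = f y 0 i).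

(* the edges of L(X,P): the k-templates Q included in X that are homomorphic
   images of P (the vertex set of L(X,P) is X) *)
Definition L_edges (d k : nat) (X P : set 'rV[R]_d) : set (set 'rV[R]_d) :=
  [set Q | [/\ Q `<=` X, kset k Q & hom_image P Q]].

Definition open_box (m : nat) (B : set 'rV[R]_m) : Prop :=
  exists a b : 'I_m -> R, (forall i, a i < b i) /\
    B = [set x | forall i, a i < x 0 i < b i].

(* semialgebraic subset of R^m: a finite union of finite intersections of
   sets {p = 0} (tag true) or {p > 0} (tag false) *)
Definition atom_holds (m : nat) (c : bool * mpoly.mpoly m R) (x : 'rV[R]_m) : Prop :=
  if c.1 then peval c.2 x = 0 else 0 < peval c.2 x.

Definition semialgebraic (m : nat) (S : set 'rV[R]_m) : Prop :=
  exists F : seq (seq (bool * mpoly.mpoly m R)),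
    S = [set x | exists2 C, Stdlib.Lists.List.In C F & forall c, Stdlib.Lists.List.In c C -> atom_holds c x].

Definition semialgebraic_on (d n : nat) (A : set 'rV[R]_d)
  (f : 'rV[R]_d -> 'rV[R]_n) : Prop :=
  semialgebraic [set row_mx x (f x) | x in A].

Definition ps_partial (d : nat) (c : ('I_d -> nat) -> R) (a x : 'rV[R]_d)
  (N : nat) : R :=
  \sum_(al : {ffun 'I_d -> 'I_N.+1})
     c (fun i => nat_of_ord (al i)) * \prod_(i < d) (x 0 i - a 0 i) ^+ al i.

Definition ps_abs_partial (d : nat) (c : ('I_d -> nat) -> R) (a x : 'rV[R]_d)
  (N : nat) : R :=
  \sum_(al : {ffun 'I_d -> 'I_N.+1})
     `|c (fun i => nat_of_ord (al i))| * \prod_(i < d) `|x 0 i - a 0 i| ^+ al i.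

Definition analytic_on (d n : nat) (A : set 'rV[R]_d)
  (f : 'rV[R]_d -> 'rV[R]_n) : Prop :=
  forall a, A a -> exists2 r : R, 0 < r & forall j : 'I_n,
    exists c : ('I_d -> nat) -> R, forall x, A x ->
      (forall i, `|x 0 i - a 0 i| < r) ->
      (exists M : R, forall N, ps_abs_partial c a x N <= M) /\
      ps_partial c a x N @[N --> \oo] --> f x 0 j.

Definition inj_each_coord (d n : nat) (A : set 'rV[R]_d)
  (g : 'rV[R]_d -> 'rV[R]_n) : Prop :=
  forall (i : 'I_d) a b, A a -> A b ->
    (forall j : 'I_d, a 0 j = b 0 j <-> j != i) -> g a != g b.

Definition immersion (d n k : nat) (E : set (set 'rV[R]_n))
  (P B : set 'rV[R]_d) (f : 'rV[R]_d -> 'rV[R]_n) : Prop :=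
  [/\ semialgebraic_on B f, analytic_on B f, inj_each_coord B f &
      forall Q, L_edges k B P Q -> {in Q &, injective f} -> E (f @` Q)].

Definition immersible (d n k : nat) (E : set (set 'rV[R]_n))
  (P : set 'rV[R]_d) : Prop :=
  exists B f, open_box B /\ immersion k E P B f.

(* H = (R^n, E) contains L(R^d, P): an injective vertex map sending every
   edge of L(R^d,P) onto an edge of H (isomorphism onto a subhypergraph) *)
Definition contains_L (d n k : nat) (E : set (set 'rV[R]_n))
  (P : set 'rV[R]_d) : Prop :=
  exists g : 'rV[R]_d -> 'rV[R]_n,
    injective g /\ forall Q, L_edges k setT P Q -> E (g @` Q).

End Defs.

(* Main.v *)
Require Import Defs.
From HB Require Import structures.
From mathcomp Require Import all_boot all_order all_algebra.
From mathcomp Require Import all_classical all_reals all_analysis.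
From mathcomp Require Import ring lra.
Set Implicit Arguments. Unset Strict Implicit. Unset Printing Implicit Defensive.
Import Order.TTheory GRing.Theory Num.Theory.
Import numFieldNormedType.Exports.
Local Open Scope classical_set_scope.
Local Open Scope ring_scope.

Section Cantor.
Variable R : realType.
Variables d n : nat.
Variable f : 'rV[R]_d -> 'rV[R]_n.
Variables a b : 'I_d -> R.
Hypothesis ab : forall i, a i < b i.
Definition Bx (x : 'rV[R]_d) := forall i, a i < x 0 i < b i.
Hypothesis fcont : forall x, Bx x -> forall j e, 0 < e -> exists2 del, 0 < del &
  forall y, Bx y -> (forall i, `|y 0 i - x 0 i| < del) -> `|f y 0 j - f x 0 j| < e.
Hypothesis finj : forall (i : 'I_d) x y, Bx x -> Bx y ->
    (forall j : 'I_d, x 0 j = y 0 j <-> j != i) -> f x != f y.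

Definition Iv := 'I_d -> seq bool -> R * R.
Definition pos (I : Iv) := forall i s, (I i s).1 < (I i s).2.
Definition inside (I : Iv) := forall i s, a i <= (I i s).1 /\ (I i s).2 <= b i.
Definition Sub (I J : Iv) := forall i s, (I i s).1 <= (J i s).1 /\ (J i s).2 <= (I i s).2.
Definition inI (I : Iv) (sg : 'I_d -> seq bool) (x : 'rV[R]_d) :=
  forall i, (I i (sg i)).1 < x 0 i < (I i (sg i)).2.
Definition Cst (I : Iv) sg tau := forall x y, inI I sg x -> inI I tau y ->
  (forall i, sg i = tau i -> x 0 i = y 0 i) -> f x != f y.

Lemma Sub_trans I J K : Sub I J -> Sub J K -> Sub I K.
Proof. move=> h1 h2 i s; have := h1 i s; have := h2 i s; move=> [? ?] [? ?]; split; lra. Qed.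

Lemma Sub_inside I J : Sub I J -> inside I -> inside J.
Proof. move=> h1 h2 i s; have := h1 i s; have := h2 i s; move=> [? ?] [? ?]; split; lra. Qed.

Lemma inI_Sub I J sg x : Sub I J -> inI J sg x -> inI I sg x.
Proof.
move=> h1 h2 i; have := h1 i (sg i); have /andP := h2 i; move=> [? ?] [? ?].
apply/andP; split; lra.
Qed.

Lemma Cst_Sub I J sg tau : Sub I J -> Cst I sg tau -> Cst J sg tau.
Proof. move=> h1 h2 x y hx hy hc; apply: h2 => //; exact: inI_Sub h1 _. Qed.

Lemma inI_B I sg x : inside I -> inI I sg x -> Bx x.
Proof.
move=> h1 h2 i; have := h1 i (sg i); have /andP := h2 i; move=> [? ?] [? ?].
apply/andP; split; lra.
Qed.

Definition mid (p : R * R) := (p.1 + p.2) / 2.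

Lemma pair_shrink I sg tau : pos I -> inside I -> (exists i, sg i != tau i) ->
  exists J, [/\ Sub I J, pos J & Cst J sg tau].
Proof.
move=> pI iI [i0 hi0].
pose x := \row_i mid (I i (sg i)).
pose y0 := \row_i mid (I i (tau i)).
have inx : inI I sg x.
  move=> i; rewrite mxE /mid; have := pI i (sg i); move=> h; apply/andP; split; lra.
have iny0 : inI I tau y0.
  move=> i; rewrite mxE /mid; have := pI i (tau i); move=> h; apply/andP; split; lra.
have [y [iny cxy nxy]] : exists y, [/\ inI I tau y,
     (forall i, sg i = tau i -> x 0 i = y 0 i) & f x != f y].
  case: (eqVneq (f x) (f y0)) => [e|ne]; last first.
    by exists y0; split => // i hi; rewrite !mxE hi.
  pose y := \row_i if i == i0 then ((I i (tau i)).1 + 3 * (I i (tau i)).2) / 4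
                   else mid (I i (tau i)).
  exists y; split.
  - move=> i; rewrite mxE; have := pI i (tau i); move=> h.
    case: ifP => _; rewrite /mid; apply/andP; split; lra.
  - move=> i hi; rewrite !mxE; case: eqP => [ei|_]; last by rewrite hi.
    by move: hi0; rewrite -ei hi eqxx.
  - rewrite e; apply: (finj (i := i0)); [exact: inI_B iny0|idtac|idtac].
      apply: inI_B (iI) _; move=> i; rewrite mxE; have := pI i (tau i); move=> h.
      case: ifP => _; rewrite /mid; apply/andP; split; lra.
    move=> j; rewrite !mxE; split.
      case: eqP => [->|] //; rewrite /mid; have := pI i0 (tau i0); move=> h ee; exfalso; clear e; lra.
    by case: eqP.
have Bx_ := inI_B iI inx; have By_ := inI_B iI iny.
have [j hj] : exists j, f x 0 j != f y 0 j.
  apply: contrapT => H; move/eqP: nxy; apply; apply/rowP => j.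
  apply/eqP; apply: contrapT => Hj; apply: H; exists j; exact/negP.
pose e := `|f x 0 j - f y 0 j| / 2.
have e0 : 0 < e by rewrite divr_gt0 // normr_gt0 subr_eq0.
have [d1 d10 hd1] := fcont Bx_ j e0.
have [d2 d20 hd2] := fcont By_ j e0.
pose del := Num.min d1 d2.
have del0 : 0 < del by rewrite lt_min d10 d20.
have dl1 : del <= d1 by rewrite ge_min lexx.
have dl2 : del <= d2 by rewrite ge_min lexx orbT.
pose shr (p : R * R) (c : R) := (Num.max p.1 (c - del / 2), Num.min p.2 (c + del / 2)).
pose J : Iv := fun i s => if s == sg i then shr (I i s) (x 0 i)
                         else if s == tau i then shr (I i s) (y 0 i) else I i s.
have shrS p c : (p.1 <= (shr p c).1) /\ ((shr p c).2 <= p.2).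
  by rewrite /shr /= le_max lexx ge_min lexx.
have shrP p c : p.1 < c < p.2 -> (shr p c).1 < (shr p c).2.
  move=> /andP[h1 h2]; rewrite /shr /=.
  have h3 : Num.max p.1 (c - del / 2) < c by rewrite gt_max h1 /=; lra.
  have h4 : c < Num.min p.2 (c + del / 2) by rewrite lt_min h2 /=; lra.
  exact: lt_trans h3 h4.
have shrB p c z : (shr p c).1 < z < (shr p c).2 -> `|z - c| < del.
  move=> /andP[]; rewrite /shr /= gt_max lt_min => /andP[_ h1] /andP[_ h2].
  rewrite ltr_norml; apply/andP; split; lra.
exists J; split.
- move=> i s; rewrite /J; case: ifP => _; first exact: shrS.
  case: ifP => _; first exact: shrS.
  split; exact: lexx.
- move=> i s; rewrite /J; case: ifP => [/eqP ->|_]; first exact: shrP.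
  case: ifP => [/eqP ->|_]; first exact: shrP; exact: pI.
move=> x' y' hx' hy' _.
have hx1 : forall i, `|x' 0 i - x 0 i| < del.
  move=> i; have := hx' i; rewrite /J eqxx; exact: shrB.
have hy1 : forall i, `|y' 0 i - y 0 i| < del.
  move=> i; have := hy' i; rewrite /J; case: ifP => [/eqP e1|_].
    by rewrite -(cxy i (esym e1)) e1; apply: shrB.
  by rewrite eqxx; apply: shrB.
have SJ : Sub I J.
  move=> i s; rewrite /J; case: ifP => _; first exact: shrS.
  case: ifP => _; first exact: shrS.
  split; exact: lexx.
have Bx' : Bx x' by apply: (inI_B iI); exact: inI_Sub SJ hx'.
have By' : Bx y' by apply: (inI_B iI); exact: inI_Sub SJ hy'.
have k1 := hd1 x' Bx' (fun i => lt_le_trans (hx1 i) dl1).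
have k2 := hd2 y' By' (fun i => lt_le_trans (hy1 i) dl2).
apply/negP => /eqP exy.
have : `|f x 0 j - f y 0 j| <= `|f x' 0 j - f x 0 j| + `|f y' 0 j - f y 0 j|.
  rewrite (_ : f x 0 j - f y 0 j = (f y' 0 j - f y 0 j) - (f x' 0 j - f x 0 j)); last first.
    by rewrite exy; ring.
  rewrite [X in _ <= X]addrC; exact: ler_normB.
rewrite /e in k1 k2; lra.
Qed.


Lemma loop (T : eqType) (g : T -> 'I_d -> seq bool) (l : seq (T * T)) I :
  pos I -> inside I -> (forall p : T * T, p.1 != p.2 -> exists i, g p.1 i != g p.2 i) ->
  exists J, [/\ Sub I J, pos J &
    forall p, p \in l -> p.1 != p.2 -> Cst J (g p.1) (g p.2)].
Proof.
move=> pI iI hg; elim: l => [|p l [J1 [S1 P1 C1]]].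
  exists I; split => //; move=> i s; split; exact: lexx.
have iJ1 := Sub_inside S1 iI.
case: (eqVneq p.1 p.2) => [ep|np].
  exists J1; split => // q; rewrite inE => /orP[/eqP ->|ql]; first by rewrite ep eqxx.
  exact: C1.
have [J2 [S2 P2 C2]] := pair_shrink P1 iJ1 (hg _ np).
exists J2; split => //; first exact: Sub_trans S1 S2.
move=> q; rewrite inE => /orP[/eqP ->|ql] // nq.
exact: Cst_Sub S2 (C1 q ql nq).
Qed.

Definition good m (I : Iv) := forall sg tau : {ffun 'I_d -> m.-tuple bool},
  sg != tau -> Cst I (fun i => tval (sg i)) (fun i => tval (tau i)).

Lemma good0 I : good 0 I.
Proof.
move=> sg tau; case/negP; apply/eqP/ffunP => i.
by rewrite (tuple0 (sg i)) (tuple0 (tau i)).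
Qed.

Lemma make_good m I : pos I -> inside I ->
  exists J, [/\ Sub I J, pos J & good m J].
Proof.
move=> pI iI.
pose T := {ffun 'I_d -> m.-tuple bool}.
have hg : forall p : T * T, p.1 != p.2 ->
    exists i, tval (p.1 i) != tval (p.2 i).
  move=> p np; apply: contrapT => H; move/negP: np; apply; apply/eqP/ffunP => i.
  apply: val_inj; apply/eqP; apply: contrapT => Hi; apply: H; exists i; exact/negP.
have [J [SJ PJ CJ]] := @loop _ (fun (t : T) i => tval (t i)) (enum {: T * T}) I pI iI hg.
exists J; split => // sg tau nst.
exact: (CJ (sg, tau) (mem_enum _ _) nst).
Qed.

Definition inner (p : R * R) := ((3 * p.1 + p.2) / 4, (p.1 + 3 * p.2) / 4).
Definition splitI (I : Iv) : Iv := fun i s =>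
  match s with [::] => I i [::] | _ :: s' => inner (I i s') end.
Definition refine (I J : Iv) := forall i c s,
  (I i s).1 < (J i (c :: s)).1 /\ (J i (c :: s)).2 < (I i s).2.

Lemma step m I : pos I -> inside I ->
  exists J, [/\ pos J, inside J, good m J & refine I J].
Proof.
move=> pI iI.
have pS : pos (splitI I).
  move=> i [|c s] /=; first exact: pI.
  by have := pI i s; rewrite /inner /= => h; lra.
have iS : inside (splitI I).
  move=> i [|c s] /=; first exact: iI.
  by have := pI i s; have := iI i s; rewrite /inner /= => -[h1 h2] h; split; lra.
have [J [SJ PJ GJ]] := make_good m pS iS.
exists J; split => //; first exact: Sub_inside SJ iS.
move=> i c s; have := SJ i (c :: s); have := pI i s; rewrite /= /inner /= => h [h1 h2].
split; lra.
Qed.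

Definition I0 : Iv := fun i _ => (a i, b i).

Lemma step_ex : forall p : nat * Iv, exists J : Iv,
  pos p.2 -> inside p.2 -> [/\ pos J, inside J, good p.1 J & refine p.2 J].
Proof.
move=> [m I]; case: (pselect (pos I /\ inside I)) => [[h1 h2]|h].
  by have [J hJ] := step m h1 h2; exists J.
by exists I => h1 h2; case: h.
Qed.

Definition stepF := projT1 (boolp.choice step_ex).

Fixpoint Iseq m : Iv := if m is m'.+1 then stepF (m, Iseq m') else I0.

Lemma Iseq_inv m : pos (Iseq m) /\ inside (Iseq m).
Proof.
elim: m => [|m [h1 h2]] /=.
  by split => i s /=; [exact: ab| split; exact: lexx].
have := projT2 (boolp.choice step_ex) (m.+1, Iseq m) h1 h2.
by rewrite -/stepF => -[].
Qed.

Lemma Iseq_good m : good m (Iseq m).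
Proof.
case: m => [|m]; first exact: good0.
have [h1 h2] := Iseq_inv m.
have := projT2 (boolp.choice step_ex) (m.+1, Iseq m) h1 h2.
by rewrite -/stepF => -[].
Qed.

Lemma Iseq_refine m : refine (Iseq m) (Iseq m.+1).
Proof.
have [h1 h2] := Iseq_inv m.
have := projT2 (boolp.choice step_ex) (m.+1, Iseq m) h1 h2.
by rewrite -/stepF => -[].
Qed.

Fixpoint node (be : nat -> bool) m : seq bool :=
  if m is m'.+1 then be m' :: node be m' else [::].

Lemma size_node be m : size (node be m) == m.
Proof. by elim: m => //= m /eqP ->. Qed.

Lemma node_eq be ga m : node be m = node ga m -> forall k, (k < m)%N -> be k = ga k.
Proof.
elim: m => // m IH /= [e1 e2] k; rewrite ltnS leq_eqVlt => /orP[/eqP ->|]//.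
exact: IH.
Qed.

Definition lo i be m := (Iseq m i (node be m)).1.
Definition hi i be m := (Iseq m i (node be m)).2.

Lemma lo_lt i be m : lo i be m < lo i be m.+1.
Proof. by have [] := Iseq_refine m i (be m) (node be m). Qed.
Lemma hi_lt i be m : hi i be m.+1 < hi i be m.
Proof. by have [] := Iseq_refine m i (be m) (node be m). Qed.
Lemma lohi i be m : lo i be m < hi i be m.
Proof. by have [h _] := Iseq_inv m; apply: h. Qed.

Lemma lo_le i be m k : (m <= k)%N -> lo i be m <= lo i be k.
Proof.
move/subnKC <-; elim: (k - m)%N => [|t IH]; first by rewrite addn0.
by rewrite addnS; apply: le_trans IH (ltW (lo_lt _ _ _)).
Qed.
Lemma hi_le i be m k : (m <= k)%N -> hi i be k <= hi i be m.
Proof.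
move/subnKC <-; elim: (k - m)%N => [|t IH]; first by rewrite addn0.
by rewrite addnS; apply: le_trans (ltW (hi_lt _ _ _)) IH.
Qed.

Lemma lo_hi i be m k : lo i be k <= hi i be m.
Proof.
apply: (le_trans (lo_le i be (leq_maxl k m))).
apply: le_trans (hi_le i be (leq_maxr k m)).
exact: ltW (lohi _ _ _).
Qed.

Definition phi i be := sup (range (lo i be)).

Lemma phi_in i be m : lo i be m < phi i be < hi i be m.
Proof.
have ne : range (lo i be) !=set0 by exists (lo i be 0), 0%N.
have ub : ubound (range (lo i be)) (hi i be m.+1) by move=> _ [k _ <-]; exact: lo_hi.
have hub : has_ubound (range (lo i be)) by exists (hi i be m.+1).
have h1 : lo i be m.+1 <= phi i be by apply: ub_le_sup => //; exists m.+1.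
have h2 : phi i be <= hi i be m.+1 by apply: ge_sup.
have := lo_lt i be m; have := hi_lt i be m => h3 h4.
apply/andP; split; [exact: lt_le_trans h4 h1| exact: le_lt_trans h2 h3].
Qed.

Definition cut (r : R) (m : nat) : bool :=
  if @pickle_inv rat m is Some q then r < ratr q else false.

Lemma cut_neq u v : u != v -> exists m, cut u m != cut v m.
Proof.
wlog uv : u v / u < v.
  move=> W nuv; case: (ltgtP u v) => [h|h|h]; first exact: W.
    by have [m hm] := W v u h (negbT (lt_eqF h)); exists m; rewrite eq_sym.
  by move: nuv; rewrite h eqxx.
move=> _; have [q /[!in_itv] /= /andP[q1 q2]] := rat_in_itvoo uv.
exists (pickle q); rewrite /cut pickleK_inv q1.
by rewrite ltNge (ltW q2).
Qed.

Definition Phi (u : 'rV[R]_d) : 'rV[R]_d := \row_j phi j (cut (u 0 j)).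

Lemma exM (be ga : 'I_d -> nat -> bool) : exists M, forall j,
  be j <> ga j -> node (be j) M <> node (ga j) M.
Proof.
have h : forall j, exists m, forall M, (m <= M)%N ->
    be j <> ga j -> node (be j) M <> node (ga j) M.
  move=> j; case: (pselect (be j = ga j)) => [e|ne].
    by exists 0%N.
  have [k hk] : exists k, be j k <> ga j k.
    apply: contrapT => H; apply: ne; apply: boolp.funext => k.
    by apply: contrapT => Hk; apply: H; exists k.
  exists k.+1 => M hM _ e; apply: hk; exact: node_eq e _ hM.
have [mj hmj] := boolp.choice h.
exists (\max_j mj j)%N => j; apply: hmj; exact: leq_bigmax.
Qed.

Lemma Phi_inj u v : u != v -> f (Phi u) != f (Phi v).
Proof.
move=> nuv.
pose be j := cut (u 0 j); pose ga j := cut (v 0 j).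
have [M hM] := exM be ga.
pose sg : {ffun 'I_d -> M.-tuple bool} := [ffun j => Tuple (size_node (be j) M)].
pose tau : {ffun 'I_d -> M.-tuple bool} := [ffun j => Tuple (size_node (ga j) M)].
have [j0 hj0] : exists j, u 0 j != v 0 j.
  apply: contrapT => H; move/eqP: nuv; apply; apply/rowP => j.
  apply/eqP; apply: contrapT => Hj; apply: H; exists j; exact/negP.
have nbg : be j0 <> ga j0.
  have [m hm] := cut_neq hj0 => e; move: hm; by rewrite /be /ga in e *; rewrite e eqxx.
have nst : sg != tau.
  apply/negP => /eqP e; apply: (hM j0 nbg).
  by have := congr1 (fun t : {ffun 'I_d -> M.-tuple bool} => tval (t j0)) e; rewrite /sg /tau !ffunE.
have := Iseq_good nst; apply.
- move=> i; rewrite ffunE mxE /=; exact: phi_in.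
- move=> i; rewrite ffunE mxE /=; exact: phi_in.
move=> i; rewrite !ffunE /= !mxE => e.
have : be i = ga i by apply: contrapT => H; exact: hM i H e.
by rewrite /be /ga => ->.
Qed.

End Cantor.

Lemma lim_bound (R : realType) (u : nat -> R) l c K : u n @[n --> \oo] --> l ->
  (forall n, `|u n - c| <= K) -> `|l - c| <= K.
Proof.
move=> ul uK.
have cl : closed ([set z : R | c - K <= z] `&` [set z | z <= c + K]).
  by apply: closedI; [exact: closed_ge|exact: closed_le].
have := closed_cvg _ cl _ _ ul.
case.
  apply: nearW => m /=; have := uK m; rewrite ler_norml; lra.
move=> /= h1 h2; rewrite ler_norml; lra.
Qed.

Lemma minpos (R : realType) d (g : 'I_d -> R) : (forall i, 0 < g i) ->
  exists2 e, 0 < e & forall i, e <= g i.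
Proof.
move=> gp.
pose S := \sum_i (g i)^-1.
have S0 : 0 <= S by apply: sumr_ge0 => i _; rewrite invr_ge0 ltW.
exists (1 + S)^-1; first by rewrite invr_gt0; lra.
move=> i.
have hi : (g i)^-1 <= 1 + S.
  rewrite /S (bigD1 i) //=.
  have : 0 <= \sum_(j | j != i) (g j)^-1 by apply: sumr_ge0 => j _; rewrite invr_ge0 ltW.
  lra.
rewrite -[X in _ <= X]invrK lef_pV2 // posrE ?invr_gt0 //; lra.
Qed.

Lemma prod_bound (R : realType) d N (al : {ffun 'I_d -> 'I_N.+1}) (u rho : 'I_d -> R) t :
  0 < t -> t <= 1 -> (forall i, 0 <= u i <= t * rho i) ->
  al != [ffun => ord0] ->
  \prod_i u i ^+ al i <= t * \prod_i rho i ^+ al i.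
Proof.
move=> t0 t1 hu nal.
have [i0 hi0] : exists i, al i != ord0.
  apply: contrapT => H; move/eqP: nal; apply; apply/ffunP => i; rewrite ffunE.
  by apply/eqP; apply: contrapT => Hi; apply: H; exists i; exact/negP.
have rp i : 0 <= rho i.
  have := hu i; move=> /andP[h1 h2].
  have : 0 <= t * rho i by exact: le_trans h2.
  by rewrite pmulr_rge0.
have ur i : 0 <= u i <= rho i.
  have := hu i; move=> /andP[h1 h2]; rewrite h1 /=.
  apply: le_trans h2 _; rewrite ler_piMl //.
rewrite (bigD1 i0) //= [X in _ <= _ * X](bigD1 i0) //= mulrA.
apply: ler_pM.
- apply: exprn_ge0; by have /andP[] := ur i0.
- apply: prodr_ge0 => i _; apply: exprn_ge0; by have /andP[] := ur i.
- have /andP[h1 h2] := hu i0.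
  apply: le_trans (lerXn2r _ _ _ h2) _; rewrite ?nnegrE //.
    exact: le_trans h2.
  rewrite exprMn ler_wpM2r ?exprn_ge0 //.
  have : (0 < al i0)%N by rewrite lt0n.
  case: (nat_of_ord (al i0)) => // k _; rewrite exprS.
  by apply: ler_piMr; [exact: ltW | exact: exprn_ile1 (ltW t0) t1].
- apply: ler_prod => i _; apply/andP; split.
    apply: exprn_ge0; by have /andP[] := ur i.
  have /andP[h1 h2] := ur i.
  by apply: lerXn2r; rewrite ?nnegrE // (le_trans h1 h2).
Qed.

Lemma ps_bound (R : realType) d (c : ('I_d -> nat) -> R) (p y z : 'rV[R]_d) N t
  (rho : 'I_d -> R) : 0 < t -> t <= 1 -> (forall i, `|z 0 i - p 0 i| = rho i) ->
  (forall i, `|y 0 i - p 0 i| <= t * rho i) ->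
  `|ps_partial c p y N - c (fun _ => 0%N)| <= t * ps_abs_partial c p z N.
Proof.
move=> t0 t1 hz hy.
pose al0 : {ffun 'I_d -> 'I_N.+1} := [ffun => ord0].
have e0 : (fun i => nat_of_ord (al0 i)) = (fun _ => 0%N).
  by apply: boolp.funext => i; rewrite ffunE.
rewrite /ps_partial /ps_abs_partial (bigD1 al0) //= [X in _ <= _ * X](bigD1 al0) //=.
rewrite e0 (@big1 _ _ _ _ _ _ (fun i => (y 0 i - p 0 i) ^+ al0 i)); last first.
  by move=> i _; rewrite ffunE expr0.
rewrite mulr1 addrC addrK mulrDr.
have ge0 : 0 <= t * (`|c (fun=> 0%N)| * \prod_(i < d) `|z 0 i - p 0 i| ^+ al0 i).
  apply: mulr_ge0; first exact: ltW.
  by apply: mulr_ge0 => //; apply: prodr_ge0 => i _; exact: exprn_ge0.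
apply: le_trans (ler_norm_sum _ _ _) _.
rewrite -[X in X <= _]add0r; apply: lerD => //.
rewrite mulr_sumr; apply: ler_sum => al nal.
rewrite normrM normr_prod (mulrCA t); apply: ler_wpM2l => //.
under eq_bigr => i _ do rewrite normrX.
under [X in _ <= _ * X]eq_bigr => i _ do rewrite hz.
apply: prod_bound => //.
by move=> i; rewrite normr_ge0 hy.
Qed.

Lemma analytic_cont (R : realType) d n (f : 'rV[R]_d -> 'rV[R]_n) (a b : 'I_d -> R) :
  analytic_on [set x | forall i, a i < x 0 i < b i] f ->
  forall x : 'rV[R]_d, (forall i, a i < x 0 i < b i) -> forall j e, 0 < e -> exists2 del, 0 < del &
  forall y : 'rV[R]_d, (forall i, a i < y 0 i < b i) -> (forall i, `|y 0 i - x 0 i| < del) ->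
  `|f y 0 j - f x 0 j| < e.
Proof.
move=> an p Bp j e e0.
have [r r0 hr] := an p Bp.
have [c hc] := hr j.
pose rho i := Num.min r (b i - p 0 i) / 2.
have rhoP i : 0 < rho i /\ rho i < r /\ rho i < b i - p 0 i.
  have := Bp i => /andP[h1 h2].
  have m1 : Num.min r (b i - p 0 i) <= r by rewrite ge_min lexx.
  have m2 : Num.min r (b i - p 0 i) <= b i - p 0 i by rewrite ge_min lexx orbT.
  have m3 : 0 < Num.min r (b i - p 0 i) by rewrite lt_min r0 /= subr_gt0.
  rewrite /rho; split; [|split]; lra.
pose z := \row_i (p 0 i + rho i).
have Bz : forall i, a i < z 0 i < b i.
  move=> i; rewrite mxE; have := Bp i => /andP[h1 h2]; have [? [? ?]] := rhoP i.
  apply/andP; split; lra.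
have hzp i : `|z 0 i - p 0 i| = rho i.
  by rewrite mxE addrC addKr ger0_norm // ltW //; have [] := rhoP i.
have hzr i : `|z 0 i - p 0 i| < r by rewrite hzp; have [_ []] := rhoP i.
have [[M0 hM0] _] := hc z Bz hzr.
pose K := `|M0| + 1.
have K0 : 0 < K by rewrite /K; have := normr_ge0 M0; lra.
have [rm rm0 hrm] := minpos (fun i => proj1 (rhoP i)).
pose t := Num.min 1 (e / (4 * K)).
have t0 : 0 < t by rewrite lt_min ltr01 /= divr_gt0 // mulr_gt0.
have t1 : t <= 1 by rewrite ge_min lexx.
have tK : t * K <= e / 4.
  have : t <= e / (4 * K) by rewrite ge_min lexx orbT.
  rewrite ler_pdivlMr ?mulr_gt0 // => h.
  rewrite ler_pdivlMr //; move: h; rewrite mulrA [t * 4]mulrC -mulrA //.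
  by rewrite mulrC.
have key (y : 'rV[R]_d) : (forall i, a i < y 0 i < b i) -> (forall i, `|y 0 i - p 0 i| <= t * rho i) ->
    `|f y 0 j - c (fun _ => 0%N)| <= t * K.
  move=> By hy.
  have hyr i : `|y 0 i - p 0 i| < r.
    apply: le_lt_trans (hy i) _; have [h1 [h2 _]] := rhoP i.
    apply: le_lt_trans h2; rewrite ler_piMl // ltW //.
  have [_ cv] := hc y By hyr.
  apply: lim_bound cv _ => N.
  apply: le_trans (ps_bound c N t0 t1 hzp hy) _.
  apply: ler_wpM2l; first exact: ltW.
  apply: le_trans (hM0 N) _; rewrite /K; have := ler_norm M0; lra.
exists (t * rm); first exact: mulr_gt0.
move=> y By hy.
have k1 := key y By (fun i => ltW (lt_le_trans (hy i) (ler_wpM2l (ltW t0) (hrm i)))).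
have k2 : `|f p 0 j - c (fun _ => 0%N)| <= t * K.
  apply: key => // i; rewrite subrr normr0; apply: mulr_ge0; first exact: ltW.
  by have [h _] := rhoP i; exact: ltW.
have : `|f y 0 j - f p 0 j| <= `|f y 0 j - c (fun _ => 0%N)| + `|f p 0 j - c (fun _ => 0%N)|.
  rewrite (_ : f y 0 j - f p 0 j = (f y 0 j - c (fun _ => 0%N)) - (f p 0 j - c (fun _ => 0%N))).
    exact: ler_normB.
  by ring.
move: k1 k2; clear hy key; lra.
Qed.


Theorem lemma2p1 (R : realType) (d n k : nat) (E : set (set 'rV[R]_n))
  (P : set 'rV[R]_d) :
  (1 <= d)%N -> (1 <= n)%N -> (2 <= k)%N ->
  algebraic k E -> template k P -> immersible k E P ->
  contains_L k E P.
Proof.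
move=> _ _ _ _ _ [B [f [[a [b [ab eB]]] [_ an fi edges]]]].
subst B.
have fc := analytic_cont an.
pose Ph := @Phi R d n f a b fc fi.
have PhI : forall u v, u != v -> f (Ph u) != f (Ph v) := fun u v => @Phi_inj R d n f a b ab fc fi u v.
have ginj : injective (f \o Ph).
  move=> u v /= e; apply: contrapT => /eqP H; have := PhI u v H; by rewrite e eqxx.
have Phinj : injective Ph by move=> u v e; apply: ginj; rewrite /= e.
exists (f \o Ph); split => // Q [_ [a0 [ia0 eQ]] [h [eh hh]]].
rewrite -image_comp.
apply: edges.
- split.
  + move=> _ [u _ <-] i; rewrite /Ph /Phi mxE.
    by have := @phi_in R d n f a b ab fc fi i (cut (u 0 i)) 0.
  + exists (Ph \o a0); split; first by move=> x y /= /Phinj /ia0.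
    by rewrite eQ image_comp.
  + exists (Ph \o h); split; first by rewrite -eh image_comp.
    move=> x y Px Py i e; rewrite /= /Ph /Phi !mxE.
    by rewrite (hh x y Px Py i e).
- move=> x y /[!inE] -[u _ <-] [v _ <-] e.
  by rewrite (ginj u v e).
Qed.
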